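(* Let $(\Omega,\mathcal{F})$ be a measurable space, $\mathcal{P}$ a nonempty set of probability measures on it, $\hat{\mathbb{E}}[Z]=\sup_{P\in\mathcal{P}}E_P[Z]$, and let $X,Y$ be random variables with $\hat{\mathbb{E}}[X^2]+\hat{\mathbb{E}}[Y^2]<\infty$. Put $U=\frac{X+Y}{2}$ and $V=\frac{X-Y}{2}$. Then $$\overline{C}(X,Y)=\max_{\beta\in\mathbb{R}}\min_{\alpha\in\mathbb{R}}\hat{\mathbb{E}}[(U-\alpha)^2-(V-\beta)^2],\qquad \underline{C}(X,Y)=\min_{\alpha\in\mathbb{R}}\max_{\beta\in\mathbb{R}}\left(-\hat{\mathbb{E}}[-(U-\alpha)^2+(V-\beta)^2]\right).$$ In particular, $\overline{C}(X,X)=\overline{V}(X)$ and $\underline{C}(X,X)=\underline{V}(X)$.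
   Context: For a random variable $W$ with $\hat{\mathbb{E}}[W^2]<\infty$: $\overline{\mu}_W=\hat{\mathbb{E}}[W]$, $\underline{\mu}_W=-\hat{\mathbb{E}}[-W]$, $M_W=[\underline{\mu}_W,\overline{\mu}_W]$. Upper variance $\overline{V}(W)=\min_{\mu\in M_W}\hat{\mathbb{E}}[(W-\mu)^2]$, lower variance $\underline{V}(W)=\min_{\mu\in M_W}\left(-\hat{\mathbb{E}}[-(W-\mu)^2]\right)$. Upper covariance $\overline{C}(X,Y)=\max_{\mu_2\in M_Y}\min_{\mu_1\in M_X}\hat{\mathbb{E}}[(X-\mu_1)(Y-\mu_2)]$; lower covariance $\underline{C}(X,Y)=\min_{\mu_2\in M_Y}\max_{\mu_1\in M_X}\left(-\hat{\mathbb{E}}[-(X-\mu_1)(Y-\mu_2)]\right)$. *)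

(* Defs.v *)
From HB Require Import structures.
From mathcomp Require Import all_boot all_order all_algebra.
From mathcomp Require Import all_classical all_reals.
From mathcomp Require Import ereal topology normedtype sequences measure lebesgue_measure lebesgue_integral probability.
Set Implicit Arguments. Unset Strict Implicit. Unset Printing Implicit Defensive.
Import Order.TTheory GRing.Theory Num.Theory.
Local Open Scope classical_set_scope.
Local Open Scope ring_scope.
Local Open Scope ereal_scope.

Definition sublin_exp d (T : measurableType d) (R : realType)
  (Ps : set (probability T R)) (Z : T -> R) : \bar R :=
  ereal_sup [set (\int[P]_x (Z x)%:E) | P in Ps].

Definition meanset d (T : measurableType d) (R : realType)
  (Ps : set (probability T R)) (W : T -> R) : set R :=
  [set mu : R | - sublin_exp Ps (fun x => (- W x)%R) <= mu%:E
                /\ mu%:E <= sublin_exp Ps W].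

Definition is_max (R : realType) (S : set (\bar R)) (m : \bar R) :=
  S m /\ forall s, S s -> s <= m.
Definition is_min (R : realType) (S : set (\bar R)) (m : \bar R) :=
  S m /\ forall s, S s -> m <= s.

Definition is_maxmin (R : realType) (S1 S2 : Type) (B : set S1) (A : set S2)
  (F : S1 -> S2 -> \bar R) (c : \bar R) :=
  exists h : S1 -> \bar R,
    (forall b, B b -> is_min [set F b a | a in A] (h b)) /\
    is_max [set h b | b in B] c.

Definition is_minmax (R : realType) (S1 S2 : Type) (B : set S1) (A : set S2)
  (F : S1 -> S2 -> \bar R) (c : \bar R) :=
  exists h : S1 -> \bar R,
    (forall b, B b -> is_max [set F b a | a in A] (h b)) /\
    is_min [set h b | b in B] c.

(* Main.v *)
Require Import Defs.
From HB Require Import structures.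
From mathcomp Require Import all_boot all_order all_algebra.
From mathcomp Require Import all_classical all_reals.
From mathcomp Require Import ereal topology normedtype sequences measure lebesgue_measure lebesgue_integral probability.
From mathcomp Require Import derive.
From mathcomp Require Import lra ring.
Import Order.TTheory GRing.Theory Num.Theory.
Import numFieldNormedType.Exports.
Set Implicit Arguments. Unset Strict Implicit. Unset Printing Implicit Defensive.
Local Open Scope classical_set_scope.
Local Open Scope ring_scope.

Lemma supP_ub (R : realType) (J : Type) (Q : set J) (f : J -> R) (M : R) i :
  (forall j, Q j -> f j <= M) -> Q i -> f i <= sup [set f j | j in Q].
Proof.
move=> HM Qi; apply: sup_upper_bound; last by exists i.
split; first by exists (f i), i.
by exists M => _ [j Qj <-]; exact: HM.
Qed.

Lemma supP_le (R : realType) (J : Type) (Q : set J) (f : J -> R) (M : R) :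
  Q !=set0 -> (forall j, Q j -> f j <= M) -> sup [set f j | j in Q] <= M.
Proof.
move=> [i Qi] HM; apply: ge_sup; first by exists (f i), i.
by move=> _ [j Qj <-]; exact: HM.
Qed.

Lemma mulbnd (R : realType) (x y X Y : R) : `|x| <= X -> `|y| <= Y -> x * y <= X * Y.
Proof.
move=> hx hy; apply: (le_trans (ler_norm _)); rewrite normrM.
by apply: ler_pM => //; exact: normr_ge0.
Qed.

Definition clamp (R : realType) (lo hi x : R) :=
  if x < lo then lo else if hi < x then hi else x.

Lemma clamp_in (R : realType) (lo hi x : R) : lo <= hi -> lo <= clamp lo hi x <= hi.
Proof.
rewrite /clamp => h; case: ltrP => h1; first by rewrite lexx h.
case: ltrP => h2; first by rewrite h lexx.
by rewrite h1 h2.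
Qed.

Lemma clamp_id (R : realType) (lo hi x : R) : lo <= x <= hi -> clamp lo hi x = x.
Proof.
move=> /andP[h1 h2]; rewrite /clamp; case: ltrP => h3; first lra.
case: ltrP => h4 //; lra.
Qed.

Lemma clamp_lip (R : realType) (lo hi x y : R) : lo <= hi ->
  `|clamp lo hi x - clamp lo hi y| <= `|x - y|.
Proof.
move=> h; have h1 := ler_norm (x - y); have h2 := ler_norm (y - x).
rewrite distrC in h2; rewrite ler_norml /clamp.
by case: ltrP => a1; case: ltrP => a2; case: ltrP => a3; try case: ltrP => a4; lra.
Qed.

Lemma clamp_sq (R : realType) (lo hi x m : R) : lo <= m <= hi ->
  (clamp lo hi x - m) ^+ 2 <= (x - m) ^+ 2.
Proof.
move=> /andP[h1 h2]; rewrite /clamp; case: ltrP => a1; first nra.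
case: ltrP => a2; first nra.
exact: lexx.
Qed.

Lemma lip_cont (R : realType) (f : R -> R) (L : R) :
  (forall x y, `|f x - f y| <= L * `|x - y|) -> continuous f.
Proof.
move=> Hf x; apply/cvgrPdist_le => eps eps0.
have L0 : 0 < `|L| + 1 by rewrite ltr_pwDr // normr_ge0.
exists (eps / (`|L| + 1)); first by rewrite /= divr_gt0.
move=> t /= xt.
apply: (le_trans (Hf x t)).
move: xt; rewrite ltr_pdivlMr // => xt.
have := ler_norm L; have := normr_ge0 (x - t); have := normr_ge0 L.
nra.
Qed.

Lemma EVT_min_lip (R : realType) (f : R -> R) (L lo hi : R) :
  (forall x y, `|f x - f y| <= L * `|x - y|) -> lo <= hi ->
  exists2 c, lo <= c <= hi & forall t, lo <= t <= hi -> f c <= f t.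
Proof.
move=> Hf lh; have [c ci Hc] := EVT_min lh (continuous_subspaceT (@lip_cont R f L Hf)).
exists c; first by move: ci; rewrite in_itv.
by move=> t ti; apply: Hc; rewrite in_itv.
Qed.

Lemma EVT_max_lip (R : realType) (f : R -> R) (L lo hi : R) :
  (forall x y, `|f x - f y| <= L * `|x - y|) -> lo <= hi ->
  exists2 c, lo <= c <= hi & forall t, lo <= t <= hi -> f t <= f c.
Proof.
move=> Hf lh; have [c ci Hc] := EVT_max lh (continuous_subspaceT (@lip_cont R f L Hf)).
exists c; first by move: ci; rewrite in_itv.
by move=> t ti; apply: Hc; rewrite in_itv.
Qed.
Section Core.
Variables (R : realType) (I : Type) (P : set I) (a b e : I -> R) (K : R).
Hypotheses (P0 : P !=set0) (Ka : forall i, P i -> `|a i| <= K)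
  (Kb : forall i, P i -> `|b i| <= K) (Ke : forall i, P i -> `|e i| <= K).

Definition mom i c0 c1 c2 c3 := c0 + c1 * a i + c2 * b i + c3 * e i.
Definition Sup c0 c1 c2 c3 := sup [set mom i c0 c1 c2 c3 | i in P].

Lemma K0 : 0 <= K.
Proof. by case: P0 => i Pi; apply: le_trans (Ka Pi); exact: normr_ge0. Qed.

Lemma mom_bnd i c0 c1 c2 c3 : P i ->
  mom i c0 c1 c2 c3 <= `|c0| + `|c1| * K + `|c2| * K + `|c3| * K.
Proof.
move=> Pi; rewrite /mom.
have n0 := ler_norm c0.
have n1 := mulbnd (lexx `|c1|) (Ka Pi).
have n2 := mulbnd (lexx `|c2|) (Kb Pi).
have n3 := mulbnd (lexx `|c3|) (Ke Pi).
lra.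
Qed.

Lemma Sup_ub i c0 c1 c2 c3 : P i -> mom i c0 c1 c2 c3 <= Sup c0 c1 c2 c3.
Proof. by move=> Pi; apply: supP_ub Pi => j Pj; exact: mom_bnd. Qed.

Lemma Sup_le c0 c1 c2 c3 M : (forall i, P i -> mom i c0 c1 c2 c3 <= M) ->
  Sup c0 c1 c2 c3 <= M.
Proof. by move=> H; apply: supP_le. Qed.

Lemma Sup_mono c0 c1 c2 c3 d0 d1 d2 d3 :
  (forall i, P i -> mom i c0 c1 c2 c3 <= mom i d0 d1 d2 d3) ->
  Sup c0 c1 c2 c3 <= Sup d0 d1 d2 d3.
Proof. by move=> H; apply: Sup_le => i Pi; apply: le_trans (H i Pi) (Sup_ub _ _ _ _ Pi). Qed.

Lemma Sup_ext c0 c1 c2 c3 d0 d1 d2 d3 :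
  (forall i, P i -> mom i c0 c1 c2 c3 = mom i d0 d1 d2 d3) ->
  Sup c0 c1 c2 c3 = Sup d0 d1 d2 d3.
Proof.
move=> H; apply/le_anti/andP; split; apply: Sup_mono => i Pi; rewrite H //.
Qed.

Lemma Sup_lip c0 c1 c2 c3 d0 d1 d2 d3 D :
  (forall i, P i -> `|mom i c0 c1 c2 c3 - mom i d0 d1 d2 d3| <= D) ->
  `|Sup c0 c1 c2 c3 - Sup d0 d1 d2 d3| <= D.
Proof.
move=> H.
have hc : Sup c0 c1 c2 c3 <= Sup d0 d1 d2 d3 + D.
  apply: Sup_le => i Pi; have := H i Pi; rewrite ler_norml => /andP[h1 h2].
  have := Sup_ub d0 d1 d2 d3 Pi; lra.
have hd : Sup d0 d1 d2 d3 <= Sup c0 c1 c2 c3 + D.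
  apply: Sup_le => i Pi; have := H i Pi; rewrite ler_norml => /andP[h1 h2].
  have := Sup_ub c0 c1 c2 c3 Pi; lra.
rewrite ler_norml; apply/andP; split; lra.
Qed.

Definition f i m1 m2 := mom i (m1 * m2) (- m2) (- m1) 1.
Definition Phi m1 m2 := Sup (m1 * m2) (- m2) (- m1) 1.
Definition G beta alpha := Phi (alpha + beta) (alpha - beta).

Lemma f_Phi i m1 m2 : P i -> f i m1 m2 <= Phi m1 m2.
Proof. exact: Sup_ub. Qed.

Definition Ap := Sup 0 1 0 0.
Definition Am := - Sup 0 (-1) 0 0.
Definition Bp := Sup 0 0 1 0.
Definition Bm := - Sup 0 0 (-1) 0.

Lemma a_in i : P i -> Am <= a i <= Ap.
Proof.
move=> Pi; have h1 := Sup_ub 0 1 0 0 Pi; have h2 := Sup_ub 0 (-1) 0 0 Pi.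
rewrite /mom in h1 h2; rewrite /Am /Ap; apply/andP; split; lra.
Qed.

Lemma b_in i : P i -> Bm <= b i <= Bp.
Proof.
move=> Pi; have h1 := Sup_ub 0 0 1 0 Pi; have h2 := Sup_ub 0 0 (-1) 0 Pi.
rewrite /mom in h1 h2; rewrite /Bm /Bp; apply/andP; split; lra.
Qed.

Lemma AmAp : Am <= Ap.
Proof. by case: P0 => i Pi; have /andP[] := a_in Pi; apply: le_trans. Qed.

Lemma BmBp : Bm <= Bp.
Proof. by case: P0 => i Pi; have /andP[] := b_in Pi; apply: le_trans. Qed.

Lemma Ap_le : Ap <= K.
Proof. by apply: Sup_le => i Pi; have := Ka Pi; rewrite /mom ler_norml; lra. Qed.

Lemma Am_ge : - K <= Am.
Proof.
rewrite /Am lerN2; apply: Sup_le => i Pi; have := Ka Pi; rewrite /mom ler_norml; lra.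
Qed.

Definition mix (l x y : R) := l * x + (1 - l) * y.
Definition Cv i j l := mix l (e i) (e j) - mix l (a i) (a j) * mix l (b i) (b j).
Definition Q3 : set (I * I * R) := [set t | P t.1.1 /\ P t.1.2 /\ 0 <= t.2 <= 1].
Definition S := sup [set Cv t.1.1 t.1.2 t.2 | t in Q3].

Lemma mix_bnd (l x y : R) M : 0 <= l <= 1 -> `|x| <= M -> `|y| <= M -> `|mix l x y| <= M.
Proof.
move=> /andP[l0 l1]; rewrite /mix !ler_norml => /andP[x1 x2] /andP[y1 y2].
apply/andP; split; nra.
Qed.

Lemma Cv_bnd t : Q3 t -> Cv t.1.1 t.1.2 t.2 <= K + K * K.
Proof.
case: t => [[i j] l] /= [Pi [Pj hl]]; rewrite /Cv.
have h1 := mix_bnd hl (Ke Pi) (Ke Pj).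
have h2 := mix_bnd hl (Ka Pi) (Ka Pj).
have h3 := mix_bnd hl (Kb Pi) (Kb Pj).
have h4 := ler_norm (- (mix l (a i) (a j) * mix l (b i) (b j))).
rewrite normrN normrM in h4.
have h5 : `|mix l (a i) (a j)| * `|mix l (b i) (b j)| <= K * K.
  by apply: ler_pM => //; exact: normr_ge0.
have h6 := ler_norm (mix l (e i) (e j)).
lra.
Qed.

Lemma Cv_S i j l : P i -> P j -> 0 <= l <= 1 -> Cv i j l <= S.
Proof.
move=> Pi Pj hl; apply: (@supP_ub _ _ Q3 (fun t => Cv t.1.1 t.1.2 t.2) (K + K * K) (i, j, l)).
  exact: Cv_bnd.
by [].
Qed.

Lemma S_le M : (forall i j l, P i -> P j -> 0 <= l <= 1 -> Cv i j l <= M) -> S <= M.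
Proof.
move=> H; apply: supP_le.
  by case: P0 => i Pi; exists (i, i, 1); do 2 split => //; rewrite /= ler01 lexx.
by case => [[i j] l] /= [Pi [Pj hl]]; exact: H.
Qed.

Definition cov i := e i - a i * b i.

Lemma cov_S i : P i -> cov i <= S.
Proof.
move=> Pi; have : 0 <= (1:R) <= 1 by rewrite ler01 lexx.
move=> /(Cv_S Pi Pi).
by rewrite /Cv /mix /cov subrr !mul0r !addr0 !mul1r.
Qed.

Lemma f_cov i m1 m2 : f i m1 m2 = cov i + (m1 - a i) * (m2 - b i).
Proof. rewrite /f /mom /cov; ring. Qed.

Lemma mix_eq i j l m1 m2 :
  l * f i m1 m2 + (1 - l) * f j m1 m2 =
  Cv i j l + (m1 - mix l (a i) (a j)) * (m2 - mix l (b i) (b j)).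
Proof. rewrite /f /mom /Cv /mix; ring. Qed.

Lemma mix_le i j l m1 m2 : P i -> P j -> 0 <= l <= 1 ->
  l * f i m1 m2 + (1 - l) * f j m1 m2 <=
  S + (m1 - mix l (a i) (a j)) * (m2 - mix l (b i) (b j)).
Proof. by move=> Pi Pj hl; rewrite mix_eq lerD2r; exact: Cv_S. Qed.

Lemma mix_Phi i j l m1 m2 : P i -> P j -> 0 <= l <= 1 ->
  l * f i m1 m2 + (1 - l) * f j m1 m2 <= Phi m1 m2.
Proof.
move=> Pi Pj /andP[l0 l1]; have h1 := f_Phi m1 m2 Pi; have h2 := f_Phi m1 m2 Pj.
nra.
Qed.

Lemma wmix i j wi wj m1 m2 : P i -> P j -> 0 <= wi -> 0 <= wj -> 0 < wi + wj ->
  (wi + wj) * (wi * f i m1 m2 + wj * f j m1 m2) <=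
  (wi + wj) ^+ 2 * S + ((wi + wj) * m1 - (wi * a i + wj * a j)) *
                       ((wi + wj) * m2 - (wi * b i + wj * b j)).
Proof.
move=> Pi Pj hi hj hW; set W := wi + wj.
have W0 : W != 0 by rewrite gt_eqF.
have hl : 0 <= wi / W <= 1.
  apply/andP; split; first by apply: divr_ge0 => //; exact: ltW.
  by rewrite ler_pdivrMr // mul1r /W lerDl.
have := mix_le m1 m2 Pi Pj hl.
have E1 : wi / W * f i m1 m2 + (1 - wi / W) * f j m1 m2 =
          (W * (wi * f i m1 m2 + wj * f j m1 m2)) / W ^+ 2.
  by rewrite /W; field; exact: W0.
have E2 : S + (m1 - mix (wi / W) (a i) (a j)) * (m2 - mix (wi / W) (b i) (b j)) =
   (W ^+ 2 * S + (W * m1 - (wi * a i + wj * a j)) * (W * m2 - (wi * b i + wj * b j))) / W ^+ 2.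
  by rewrite /mix /W; field; exact: W0.
by rewrite E1 E2 ler_pM2r // invr_gt0 exprn_gt0.
Qed.


Lemma L1 m2 : exists2 x, Am <= x <= Ap & Phi x m2 <= S.
Proof.
pose s i := m2 - b i; pose p i := e i - m2 * a i.
have fE : forall i x, f i x m2 = p i + s i * x.
  by move=> i x; rewrite /f /mom /p /s; ring.
pose L := [set y | y = Am \/ exists2 j, P j & s j < 0 /\ y = (S - p j) / s j].
have LA : forall y, L y -> y <= Ap.
  move=> y [->|[j Pj [sj ->]]]; first exact: AmAp.
  rewrite ler_ndivrMr //.
  have h1 := cov_S Pj; have /andP[h2 h3] := a_in Pj; have Ef := f_cov j Ap m2.
  rewrite fE -/(s j) in Ef; nra.
have hL : has_sup L by split; [exists Am; left | exists Ap => y /LA].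
pose x := sup L.
have xge : forall y, L y -> y <= x by move=> y Ly; exact: sup_upper_bound hL _ Ly.
have xle : forall M, (forall y, L y -> y <= M) -> x <= M.
  by move=> M HM; apply: ge_sup => //; exists Am; left.
exists x; first by apply/andP; split; [apply: xge; left | apply: xle; exact LA].
apply: Sup_le => i Pi; change (f i x m2 <= S).
case: (ltgtP (s i) 0) => hs.
- have := xge ((S - p i) / s i) (or_intror (ex_intro2 _ _ i Pi (conj hs erefl))).
  rewrite ler_ndivrMr // fE; lra.
- have : x <= (S - p i) / s i.
    apply: xle => y [->|[j Pj [sj ->]]].
    + rewrite ler_pdivlMr //.
      have h1 := cov_S Pi; have /andP[h2 h3] := a_in Pi; have Ef := f_cov i Am m2.
      rewrite fE -/(s i) in Ef; nra.
    + pose u := (S - p j) / s j; pose v := (S - p i) / s i.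
      have hu : s j * u = S - p j by rewrite /u mulrC divfK // lt_eqF.
      have hv : s i * v = S - p i by rewrite /v mulrC divfK // gt_eqF.
      have W0 : 0 < - s j + s i by lra.
      have sj' : 0 <= - s j by lra.
      have := wmix 0 m2 Pi Pj sj' (ltW hs) W0.
      have -> : (- s j + s i) * m2 - (- s j * b i + s i * b j) = 0 by rewrite /s; ring.
      rewrite mulr0 addr0 !fE !mulr0 !addr0 expr2 -mulrA ler_pM2l // => H1.
      have H2 : s i * s j * (v - u) <= 0.
        rewrite (_ : s i * s j * (v - u) = s j * (s i * v) - s i * (s j * u)); last by ring.
        rewrite hu hv; lra.
      have q : s i * s j < 0 by rewrite pmulr_rlt0.
      by move: H2; rewrite nmulr_rle0 // subr_ge0.
  rewrite ler_pdivlMr // fE; lra.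
- rewrite f_cov (_ : m2 - b i = 0) ?mulr0 ?addr0; first exact: cov_S.
  exact: hs.
Qed.


Definition mm i := (a i + b i) / 2.
Definition nn i := (a i - b i) / 2.

Lemma qE i alpha beta :
  f i (alpha + beta) (alpha - beta) = cov i + (alpha - mm i) ^+ 2 - (beta - nn i) ^+ 2.
Proof. by rewrite f_cov /mm /nn; field. Qed.

Lemma R1 beta : exists alpha, G beta alpha <= S.
Proof.
pose rad i := S - cov i + (beta - nn i) ^+ 2.
have rad0 : forall i, P i -> 0 <= rad i.
  by move=> i Pi; rewrite /rad; have := cov_S Pi; have := sqr_ge0 (beta - nn i); lra.
pose rho i := Num.sqrt (rad i).
have rho0 : forall i, 0 <= rho i by move=> i; exact: sqrtr_ge0.
have rho2 : forall i, P i -> rho i ^+ 2 = rad i by move=> i Pi; rewrite sqr_sqrtr // rad0.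
have pw : forall i j, P i -> P j -> mm i - rho i <= mm j + rho j.
  move=> i j Pi Pj; rewrite leNgt; apply/negP => hlt.
  pose a0 := (mm i - rho i + mm j + rho j) / 2.
  pose wi := a0 - mm j; pose wj := mm i - a0.
  have hri := rho0 i; have hrj := rho0 j.
  have wi0 : 0 < wi by rewrite /wi /a0; lra.
  have wj0 : 0 < wj by rewrite /wj /a0; lra.
  have := wmix (a0 + beta) (a0 - beta) Pi Pj (ltW wi0) (ltW wj0) (addr_gt0 wi0 wj0).
  set u := (_ * (a0 + beta) - _); set v := (_ * (a0 - beta) - _).
  have uv : v = - u by rewrite /u /v /wi /wj /a0 /mm; field.
  have uv2 : u * v <= 0 by rewrite uv mulrN oppr_le0 -expr2 sqr_ge0.
  have qi : S < f i (a0 + beta) (a0 - beta).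
    rewrite qE; have := rho2 i Pi; rewrite /rad => r2.
    have : rho i ^+ 2 < (a0 - mm i) ^+ 2.
      rewrite -[(a0 - mm i) ^+ 2]sqrrN opprB -subr_gt0 subr_sqr mulr_gt0 //; rewrite /a0; lra.
    lra.
  have qj : S < f j (a0 + beta) (a0 - beta).
    rewrite qE; have := rho2 j Pj; rewrite /rad => r2.
    have : rho j ^+ 2 < (a0 - mm j) ^+ 2.
      rewrite -subr_gt0 subr_sqr mulr_gt0 //; rewrite /a0; lra.
    lra.
  set qqi := f i _ _ in qi *; set qqj := f j _ _ in qj *.
  have h1 : (wi + wj) * S < wi * qqi + wj * qqj by nra.
  have h2 : (wi + wj) * ((wi + wj) * S) < (wi + wj) * (wi * qqi + wj * qqj).
    by rewrite ltr_pM2l // addr_gt0.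
  rewrite expr2 -mulrA; lra.
case: P0 => j0 Pj0.
have ub : forall i, P i -> mm i - rho i <= mm j0 + rho j0 by move=> i Pi; exact: pw.
pose al := sup [set mm i - rho i | i in P].
exists al; apply: Sup_le => i Pi; change (f i (al + beta) (al - beta) <= S).
have h1 : mm i - rho i <= al by apply: (supP_ub ub Pi).
have h2 : al <= mm i + rho i by apply: supP_le => // k Pk; exact: pw.
rewrite qE; have := rho2 i Pi; rewrite /rad => r2.
have := rho0 i; nra.
Qed.


Lemma Phi_lip1 m2 x y : `|Phi x m2 - Phi y m2| <= (`|m2| + K) * `|x - y|.
Proof.
apply: Sup_lip => i Pi.
rewrite (_ : _ - _ = (x - y) * (m2 - b i)); last by rewrite /mom; ring.
rewrite normrM mulrC ler_wpM2r ?normr_ge0 //.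
by apply: le_trans (ler_normB m2 (b i)) _; rewrite lerD2l; exact: Kb.
Qed.

Lemma Phi_lip2 x m2 m2' : `|Phi x m2 - Phi x m2'| <= (`|x| + K) * `|m2 - m2'|.
Proof.
apply: Sup_lip => i Pi.
rewrite (_ : _ - _ = (m2 - m2') * (x - a i)); last by rewrite /mom; ring.
rewrite normrM mulrC ler_wpM2r ?normr_ge0 //.
by apply: le_trans (ler_normB x (a i)) _; rewrite lerD2l; exact: Ka.
Qed.

Lemma mix_in (l x y lo hi : R) : 0 <= l <= 1 -> lo <= x <= hi -> lo <= y <= hi ->
  lo <= mix l x y <= hi.
Proof. move=> /andP[? ?] /andP[? ?] /andP[? ?]; rewrite /mix; apply/andP; split; nra. Qed.

Lemma C1 : exists k : R -> R,
  (forall m2, (exists2 x, Am <= x <= Ap & k m2 = Phi x m2) /\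
              forall x, Am <= x <= Ap -> k m2 <= Phi x m2) /\
  (exists2 m2, Bm <= m2 <= Bp & k m2 = S) /\
  (forall m2, Bm <= m2 <= Bp -> k m2 <= S).
Proof.
have H : forall m2, exists x, Am <= x <= Ap /\
                      forall t, Am <= t <= Ap -> Phi x m2 <= Phi t m2.
  move=> m2.
  have [x hx Hx] := @EVT_min_lip R (fun x => Phi x m2) _ _ _ (Phi_lip1 m2) AmAp.
  by exists x.
have [xm Hxm] := choice H.
pose k m2 := Phi (xm m2) m2.
have xmK : forall m2, `|xm m2| <= K.
  move=> m2; have [/andP[h1 h2] _] := Hxm m2; have := Am_ge; have := Ap_le.
  rewrite ler_norml; lra.
have klip1 : forall u v, k u <= k v + (K + K) * `|u - v|.
  move=> u v; have [hv _] := Hxm v; have [_ Hu] := Hxm u.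
  have h1 := Hu _ hv; have := Phi_lip2 (xm v) u v; rewrite ler_norml => /andP[_ h2].
  have h3 : (`|xm v| + K) * `|u - v| <= (K + K) * `|u - v|.
    by rewrite ler_wpM2r ?normr_ge0 // lerD2r.
  rewrite /k; lra.
have klip : forall u v, `|k u - k v| <= (K + K) * `|u - v|.
  move=> u v; have h1 := klip1 u v; have h2 := klip1 v u; rewrite distrC in h2.
  rewrite ler_norml; apply/andP; split; lra.
have [m2s hm2s Hmax] := @EVT_max_lip R k _ _ _ klip BmBp.
have kS : k m2s = S.
  apply/le_anti/andP; split.
    have [x hx hxS] := L1 m2s; apply: le_trans hxS; have [_ Hm] := Hxm m2s; exact: Hm.
  apply: S_le => i j l Pi Pj hl.
  pose bl := mix l (b i) (b j).
  have blin : Bm <= bl <= Bp by apply: mix_in => //; [exact: b_in | exact: b_in].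
  apply: le_trans (Hmax _ blin); rewrite /k.
  have := mix_Phi (xm bl) bl Pi Pj hl; rewrite mix_eq -/bl subrr mulr0 addr0.
  by [].
exists k; split; [|split].
- move=> m2; have [h1 h2] := Hxm m2; split => //; by exists (xm m2).
- by exists m2s.
- by move=> m2 hm2; rewrite -kS; exact: Hmax.
Qed.


Lemma mmK i : P i -> - K <= mm i <= K.
Proof. by move=> Pi; have := Ka Pi; have := Kb Pi; rewrite /mm !ler_norml; lra. Qed.

Lemma nnK i : P i -> - K <= nn i <= K.
Proof. by move=> Pi; have := Ka Pi; have := Kb Pi; rewrite /nn !ler_norml; lra. Qed.

Lemma G_clamp beta alpha : G beta (clamp (- K) K alpha) <= G beta alpha.
Proof.
apply: Sup_mono => i Pi.
change (f i (clamp (- K) K alpha + beta) (clamp (- K) K alpha - beta) <=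
        f i (alpha + beta) (alpha - beta)).
rewrite !qE; have := @clamp_sq R (- K) K alpha (mm i) (mmK Pi); lra.
Qed.

Lemma G_clampb beta alpha : G beta alpha <= G (clamp (- K) K beta) alpha.
Proof.
apply: Sup_mono => i Pi.
change (f i (alpha + beta) (alpha - beta) <=
        f i (alpha + clamp (- K) K beta) (alpha - clamp (- K) K beta)).
rewrite !qE; have := @clamp_sq R (- K) K beta (nn i) (nnK Pi); lra.
Qed.

Lemma G_lipa beta x y : - K <= x <= K -> - K <= y <= K ->
  `|G beta x - G beta y| <= (K + K + K + K) * `|x - y|.
Proof.
move=> hx hy; apply: Sup_lip => i Pi.
rewrite (_ : _ - _ = (x - y) * (x + y - (a i + b i))); last by rewrite /mom; ring.
rewrite normrM mulrC ler_wpM2r ?normr_ge0 //.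
move: hx hy; have := Ka Pi; have := Kb Pi; rewrite !ler_norml; lra.
Qed.

Lemma G_lipb x y alpha : - K <= x <= K -> - K <= y <= K ->
  `|G x alpha - G y alpha| <= (K + K + K + K) * `|x - y|.
Proof.
move=> hx hy; apply: Sup_lip => i Pi.
rewrite (_ : _ - _ = (x - y) * (- (x + y) + (a i - b i))); last by rewrite /mom; ring.
rewrite normrM mulrC ler_wpM2r ?normr_ge0 //.
move: hx hy; have := Ka Pi; have := Kb Pi; rewrite !ler_norml; lra.
Qed.

Lemma C2 : exists h : R -> R,
  (forall beta, (exists alpha, h beta = G beta alpha) /\
                forall alpha, h beta <= G beta alpha) /\
  (exists beta, h beta = S) /\ (forall beta, h beta <= S).
Proof.
have KK : - K <= K by have := K0; lra.
have K4 : 0 <= K + K + K + K by have := K0; lra.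
pose cl := clamp (- K) K.
have clin : forall x, - K <= cl x <= K by move=> x; exact: clamp_in.
have H : forall beta, exists alpha, - K <= alpha <= K /\
                        forall t, G beta alpha <= G beta t.
  move=> beta.
  have lipg : forall x y, `|G beta (cl x) - G beta (cl y)| <= (K + K + K + K) * `|x - y|.
    move=> x y; apply: le_trans (G_lipa beta (clin x) (clin y)) _.
    by rewrite ler_wpM2l // clamp_lip.
  have [c hc Hc] := @EVT_min_lip R (fun x => G beta (cl x)) _ _ _ lipg KK.
  exists c; split => // t.
  have := Hc (cl t) (clin t); rewrite /cl (clamp_id hc) (clamp_id (clin t)) => h1.
  exact: le_trans h1 (G_clamp _ _).
have [am Ham] := choice H.
pose h beta := G beta (am beta).
have hlip1 : forall u v, - K <= u <= K -> - K <= v <= K ->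
    h u <= h v + (K + K + K + K) * `|u - v|.
  move=> u v hu hv; have [_ Hu] := Ham u.
  have h1 := Hu (am v); have := G_lipb (am v) hu hv; rewrite ler_norml => /andP[_ h2].
  rewrite /h; lra.
have lipH : forall x y, `|h (cl x) - h (cl y)| <= (K + K + K + K) * `|x - y|.
  move=> x y; have h1 := hlip1 _ _ (clin x) (clin y).
  have h2 := hlip1 _ _ (clin y) (clin x); rewrite distrC in h2.
  have h3 : (K + K + K + K) * `|cl x - cl y| <= (K + K + K + K) * `|x - y|.
    by rewrite ler_wpM2l // clamp_lip.
  rewrite ler_norml; apply/andP; split; lra.
have [bs hbs Hbs] := @EVT_max_lip R (fun x => h (cl x)) _ _ _ lipH KK.
have hmax : forall beta, h beta <= h bs.
  move=> beta; have := Hbs (cl beta) (clin beta).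
  rewrite /cl (clamp_id hbs) (clamp_id (clin beta)) -/cl => h1.
  apply: le_trans h1; rewrite /h.
  have [_ Hb] := Ham beta; apply: le_trans (Hb (am (cl beta))) _.
  exact: G_clampb.
have hS : h bs = S.
  apply/le_anti/andP; split.
    have [al hal] := R1 bs; apply: le_trans hal; have [_ Hb] := Ham bs; exact: Hb.
  apply: S_le => i j l Pi Pj hl.
  pose al := mix l (a i) (a j); pose bl := mix l (b i) (b j).
  pose bQ := (al - bl) / 2.
  apply: le_trans (hmax bQ); rewrite /h /G.
  have := mix_Phi (am bQ + bQ) (am bQ - bQ) Pi Pj hl; rewrite mix_eq -/al -/bl.
  have -> : (am bQ + bQ - al) * (am bQ - bQ - bl) = (am bQ - (al + bl) / 2) ^+ 2.
    by rewrite /bQ; field.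
  have := sqr_ge0 (am bQ - (al + bl) / 2); lra.
exists h; split; [|split].
- by move=> beta; have [_ Hb] := Ham beta; split => //; exists (am beta).
- by exists bs.
- by move=> beta; rewrite -hS; exact: hmax.
Qed.

Lemma VarU : (forall i, P i -> b i = a i) ->
  (forall mu, S <= Phi mu mu) /\ exists2 mu, Am <= mu <= Ap & Phi mu mu = S.
Proof.
move=> hab; have [h [Hh [[bs hbs] hS]]] := C2.
have part1 : forall mu, S <= Phi mu mu.
  move=> mu; rewrite -hbs; have [_ Hb] := Hh bs; apply: le_trans (Hb mu) _.
  apply: Sup_mono => i Pi; rewrite /mom (hab i Pi).
  have := sqr_ge0 bs; rewrite expr2; lra.
split => //.
have [[a0 e0] _] := Hh 0.
have AA := AmAp.
exists (clamp Am Ap a0); first exact: clamp_in.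
apply/le_anti/andP; split; last exact: part1.
apply: (le_trans (y := Phi a0 a0)).
  apply: Sup_mono => i Pi; rewrite /mom (hab i Pi).
  have := @clamp_sq R Am Ap a0 (a i) (a_in Pi); rewrite !expr2; lra.
have := hS 0; rewrite e0 /G addr0 subr0; exact.
Qed.

Lemma VarL : (forall i, P i -> b i = - a i) ->
  (forall mu, G mu 0 <= S) /\ exists2 mu, Am <= mu <= Ap & G mu 0 = S.
Proof.
move=> hab; have [h [Hh [[bs hbs] hS]]] := C2.
have part1 : forall mu, G mu 0 <= S.
  move=> mu; have [[al e0] _] := Hh mu; apply: le_trans (hS mu); rewrite e0.
  apply: Sup_mono => i Pi; rewrite /mom (hab i Pi).
  have := sqr_ge0 al; rewrite !expr2; lra.
split => //.
have AA := AmAp.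
exists (clamp Am Ap bs); first exact: clamp_in.
apply/le_anti/andP; split; first exact: part1.
rewrite -hbs; have [_ Hb] := Hh bs; apply: le_trans (Hb 0) _.
apply: Sup_mono => i Pi; rewrite /mom (hab i Pi).
have := @clamp_sq R Am Ap bs (a i) (a_in Pi); rewrite !expr2; lra.
Qed.

End Core.

Section Prob.
Variables (d : measure_display) (T : measurableType d) (R : realType).
Variables (Ps : set (probability T R)) (X Y : T -> R).
Hypotheses (Ps0 : Ps !=set0) (mX : measurable_fun setT X) (mY : measurable_fun setT Y).
Hypothesis fin : (sublin_exp Ps (fun x => (X x ^+ 2)%R) + sublin_exp Ps (fun x => (Y x ^+ 2)%R) < +oo)%E.

Lemma int_le_sexp (P : probability T R) Z : Ps P ->
  (\int[P]_x (Z x)%:E <= sublin_exp Ps Z)%E.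
Proof. by move=> PP; apply: ereal_sup_ubound; exists P. Qed.

Lemma sexp_ge0 Z : (forall x, 0 <= Z x) -> (0 <= sublin_exp Ps Z)%E.
Proof.
move=> HZ; case: Ps0 => P PP; apply: le_trans (int_le_sexp Z PP).
by apply: integral_ge0 => x _; rewrite lee_fin.
Qed.

Lemma sX_fin : sublin_exp Ps (fun x => X x ^+ 2) \is a fin_num.
Proof.
rewrite ge0_fin_numE; last by apply: sexp_ge0 => x; exact: sqr_ge0.
rewrite ltNge leye_eq; apply/negP => /eqP hx; move: fin; rewrite hx addye //.
have : (0 <= sublin_exp Ps (fun x => (Y x ^+ 2)%R))%E by apply: sexp_ge0 => x; exact: sqr_ge0.
by case: (sublin_exp _ _).
Qed.

Lemma sY_fin : sublin_exp Ps (fun x => Y x ^+ 2) \is a fin_num.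
Proof.
rewrite ge0_fin_numE; last by apply: sexp_ge0 => x; exact: sqr_ge0.
rewrite ltNge leye_eq; apply/negP => /eqP hx; move: fin; rewrite hx addey //.
have : (0 <= sublin_exp Ps (fun x => (X x ^+ 2)%R))%E by apply: sexp_ge0 => x; exact: sqr_ge0.
by case: (sublin_exp _ _).
Qed.

Definition KX := fine (sublin_exp Ps (fun x => X x ^+ 2)).
Definition KY := fine (sublin_exp Ps (fun x => Y x ^+ 2)).
Definition KK := KX + KY + 1.

Section OneP.
Variable (P : probability T R).
Hypothesis PP : Ps P.

Lemma iX2 : P.-integrable setT (EFin \o (fun x => X x ^+ 2)).
Proof.
apply/integrableP; split; first exact/measurable_realfun.measurable_EFinP/measurable_realfun.measurable_funX.
rewrite (eq_integral (fun x => (X x ^+ 2)%:E)); last first.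
  by move=> x _; rewrite /= ?abse_EFin ger0_norm // sqr_ge0.
apply: le_lt_trans (int_le_sexp _ PP) _.
by rewrite -ge0_fin_numE ?sX_fin //; apply: sexp_ge0 => x; exact: sqr_ge0.
Qed.

Lemma iY2 : P.-integrable setT (EFin \o (fun x => Y x ^+ 2)).
Proof.
apply/integrableP; split; first exact/measurable_realfun.measurable_EFinP/measurable_realfun.measurable_funX.
rewrite (eq_integral (fun x => (Y x ^+ 2)%:E)); last first.
  by move=> x _; rewrite /= ?abse_EFin ger0_norm // sqr_ge0.
apply: le_lt_trans (int_le_sexp _ PP) _.
by rewrite -ge0_fin_numE ?sY_fin //; apply: sexp_ge0 => x; exact: sqr_ge0.
Qed.

Definition gg x := X x ^+ 2 + Y x ^+ 2 + 1.

Lemma iD (f g : T -> R) : P.-integrable setT (EFin \o f) -> P.-integrable setT (EFin \o g) ->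
  P.-integrable setT (EFin \o (fun x => f x + g x)).
Proof.
move=> hf hg.
have -> : EFin \o (fun x => f x + g x) = ((EFin \o f) \+ (EFin \o g))%E.
  by apply/funext => x; rewrite /= EFinD.
exact: integrableD.
Qed.

Lemma iZ (c : R) (f : T -> R) : P.-integrable setT (EFin \o f) ->
  P.-integrable setT (EFin \o (fun x => c * f x)).
Proof.
move=> hf; have -> : EFin \o (fun x => c * f x) = (fun x => c%:E * (EFin \o f) x)%E.
  by apply/funext => x; rewrite /= EFinM.
exact: integrableZl.
Qed.

Lemma iC (c : R) : P.-integrable setT (EFin \o (fun _ : T => c)).
Proof. exact: finite_measure_integrable_cst. Qed.

Lemma igg : P.-integrable setT (EFin \o gg).
Proof. by apply: iD; [apply: iD; [exact: iX2 | exact: iY2] | exact: iC]. Qed.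

Lemma idom (h : T -> R) : measurable_fun setT h -> (forall x, `|h x| <= gg x) ->
  P.-integrable setT (EFin \o h).
Proof.
move=> mh hb; apply: le_integrable igg => //; first exact/measurable_realfun.measurable_EFinP.
move=> x _; rewrite /= ?abse_EFin lee_fin (ger0_norm (_ : 0 <= gg x)) //.
by apply: le_trans (hb x); exact: normr_ge0.
Qed.

Lemma bndX r s : `|r| <= r ^+ 2 + s ^+ 2 + 1 :> R.
Proof.
have h1 := normr_ge0 r; have h2 : `|r| ^+ 2 = r ^+ 2 by rewrite real_normK ?num_real.
have := sqr_ge0 s; nra.
Qed.

Lemma bndXY r s : `|r * s| <= r ^+ 2 + s ^+ 2 + 1 :> R.
Proof.
rewrite normrM.
have h1 := normr_ge0 r; have h2 : `|r| ^+ 2 = r ^+ 2 by rewrite real_normK ?num_real.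
have h3 := normr_ge0 s; have h4 : `|s| ^+ 2 = s ^+ 2 by rewrite real_normK ?num_real.
nra.
Qed.

Lemma iX : P.-integrable setT (EFin \o X).
Proof. by apply: idom => // x; exact: bndX. Qed.
Lemma iY : P.-integrable setT (EFin \o Y).
Proof. by apply: idom => // x; rewrite /gg (addrC (X x ^+ 2)); exact: bndX. Qed.
Lemma iXY : P.-integrable setT (EFin \o (fun x => X x * Y x)).
Proof. by apply: idom => [|x]; [exact: measurable_realfun.measurable_funM | exact: bndXY]. Qed.

Lemma intD (f g : T -> R) : P.-integrable setT (EFin \o f) -> P.-integrable setT (EFin \o g) ->
  (\int[P]_x (f x + g x)%:E = \int[P]_x (f x)%:E + \int[P]_x (g x)%:E)%E.
Proof.
move=> hf hg; transitivity (\int[P]_x ((EFin \o f) x + (EFin \o g) x))%E.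
  by apply: eq_integral => x _; rewrite /= EFinD.
by rewrite integralD_EFin.
Qed.

Lemma intZ (c : R) (f : T -> R) : P.-integrable setT (EFin \o f) ->
  (\int[P]_x (c * f x)%:E = c%:E * \int[P]_x (f x)%:E)%E.
Proof.
move=> hf; rewrite -integralZl //; apply: eq_integral => x _; by rewrite EFinM.
Qed.

Lemma intC (c : R) : (\int[P]_x (c%:E) = c%:E)%E.
Proof.
rewrite integral_cst //.
by rewrite [X in (_ * X)%E](_ : _ = 1%E) ?mule1 //; exact: probability_setT.
Qed.

Definition aP := fine (\int[P]_x (X x)%:E).
Definition bP := fine (\int[P]_x (Y x)%:E).
Definition eP := fine (\int[P]_x (X x * Y x)%:E).

Lemma aPE : (\int[P]_x (X x)%:E = (aP)%:E)%E.
Proof. by rewrite fineK //; apply: (integrable_fin_num _ iX). Qed.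
Lemma bPE : (\int[P]_x (Y x)%:E = (bP)%:E)%E.
Proof. by rewrite fineK //; apply: (integrable_fin_num _ iY). Qed.
Lemma ePE : (\int[P]_x (X x * Y x)%:E = (eP)%:E)%E.
Proof. by rewrite fineK //; apply: (integrable_fin_num _ iXY). Qed.

Lemma int_lin c0 c1 c2 c3 :
  (\int[P]_x (c0 + c1 * X x + c2 * Y x + c3 * (X x * Y x))%:E =
   (c0 + c1 * aP + c2 * bP + c3 * eP)%:E)%E.
Proof.
rewrite (@intD (fun x => c0 + c1 * X x + c2 * Y x) (fun x => c3 * (X x * Y x))); last 2 first.
- by apply: iD; [apply: iD; [exact: iC | exact: iZ iX] | exact: iZ iY].
- exact: iZ iXY.
rewrite (@intD (fun x => c0 + c1 * X x) (fun x => c2 * Y x)); last 2 first.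
- by apply: iD; [exact: iC | exact: iZ iX].
- exact: iZ iY.
rewrite (@intD (fun x => c0) (fun x => c1 * X x)); last 2 first.
- exact: iC.
- exact: iZ iX.
rewrite intC !intZ ?iX ?iY ?iXY // aPE bPE ePE.
by rewrite -!EFinM -!EFinD.
Qed.

Lemma int_gg : (\int[P]_x (gg x)%:E <= KK%:E)%E.
Proof.
rewrite /gg (@intD (fun x => X x ^+ 2 + Y x ^+ 2) (fun x => 1)); last 2 first.
- by apply: iD; [exact: iX2 | exact: iY2].
- exact: iC.
rewrite (@intD (fun x => X x ^+ 2) (fun x => Y x ^+ 2)); last 2 first.
- exact: iX2.
- exact: iY2.
rewrite intC /KK /KX /KY !EFinD fineK ?sX_fin // fineK ?sY_fin //.
by apply: leeD => //; apply: leeD; exact: int_le_sexp.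
Qed.

Lemma bnd_gen (h : T -> R) : measurable_fun setT h -> (forall x, `|h x| <= gg x) ->
  `|fine (\int[P]_x (h x)%:E)| <= KK.
Proof.
move=> mh hb; have ih := idom mh hb.
rewrite -lee_fin -abse_EFin fineK; last exact: (integrable_fin_num _ ih).
apply: le_trans (le_abse_integral _ _ _) _ => //; first exact/measurable_realfun.measurable_EFinP.
apply: le_trans int_gg.
apply: le_integral => //; first exact: integrable_abse ih.
  exact: igg.
by move=> x _; rewrite /= ?abse_EFin lee_fin.
Qed.

Lemma aP_bnd : `|aP| <= KK.
Proof. by apply: bnd_gen => // x; exact: bndX. Qed.
Lemma bP_bnd : `|bP| <= KK.
Proof. by apply: bnd_gen => // x; rewrite /gg (addrC (X x ^+ 2)); exact: bndX. Qed.
Lemma eP_bnd : `|eP| <= KK.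
Proof. by apply: bnd_gen => [|x]; [exact: measurable_realfun.measurable_funM | exact: bndXY]. Qed.

End OneP.

Lemma rep c0 c1 c2 c3 F :
  (forall x, F x = c0 + c1 * X x + c2 * Y x + c3 * (X x * Y x)) ->
  sublin_exp Ps F = (Sup Ps aP bP eP c0 c1 c2 c3)%:E.
Proof.
move=> HF; rewrite /sublin_exp /Sup.
rewrite (eq_imagel (f' := fun P => (mom aP bP eP P c0 c1 c2 c3)%:E)); last first.
  move=> P PP; rewrite (eq_integral (fun x => (c0 + c1 * X x + c2 * Y x + c3 * (X x * Y x))%:E)).
    by rewrite int_lin.
  by move=> x _; rewrite HF.
rewrite (_ : [set (mom aP bP eP P c0 c1 c2 c3)%:E | P in Ps] =
             [set r%:E | r in [set mom aP bP eP P c0 c1 c2 c3 | P in Ps]]); last first.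
  by rewrite image_comp.
rewrite ereal_sup_EFin //.
  exists (`|c0| + `|c1| * KK + `|c2| * KK + `|c3| * KK) => _ [P PP <-].
  exact: (mom_bnd (fun Q HQ => aP_bnd HQ) (fun Q HQ => bP_bnd HQ) (fun Q HQ => eP_bnd HQ) _ _ _ _ PP).
by case: Ps0 => P PP; exists (mom aP bP eP P c0 c1 c2 c3), P.
Qed.

End Prob.

Lemma is_min_E (R : realType) (T' : Type) (A : set T') (g : T' -> R) v :
  (exists2 x, A x & v = g x) -> (forall x, A x -> v <= g x) ->
  is_min [set (g x)%:E | x in A] v%:E.
Proof.
move=> [x Ax ->] H; split; first by exists x.
by move=> _ [y Ay <-]; rewrite lee_fin; apply: H.
Qed.

Lemma is_max_E (R : realType) (T' : Type) (A : set T') (g : T' -> R) v :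
  (exists2 x, A x & v = g x) -> (forall x, A x -> g x <= v) ->
  is_max [set (g x)%:E | x in A] v%:E.
Proof.
move=> [x Ax ->] H; split; first by exists x.
by move=> _ [y Ay <-]; rewrite lee_fin; apply: H.
Qed.

Section Main.
Variables (d : measure_display) (T : measurableType d) (R : realType).
Variables (Ps : set (probability T R)) (X Y : T -> R).
Hypotheses (Ps0 : Ps !=set0) (mX : measurable_fun setT X) (mY : measurable_fun setT Y).
Hypothesis fin : (sublin_exp Ps (fun x => (X x ^+ 2)%R) + sublin_exp Ps (fun x => (Y x ^+ 2)%R) < +oo)%E.

Local Notation a := (aP X).
Local Notation b := (bP Y).
Local Notation e := (eP X Y).
Local Notation nb := (fun P => - bP Y P).
Local Notation ne := (fun P => - eP X Y P).
Local Notation K := (KK Ps X Y).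

Let Ka : forall P, Ps P -> `|a P| <= K := fun P PP => aP_bnd Ps0 mX mY fin PP.
Let Kb : forall P, Ps P -> `|b P| <= K := fun P PP => bP_bnd Ps0 mX mY fin PP.
Let Ke : forall P, Ps P -> `|e P| <= K := fun P PP => eP_bnd Ps0 mX mY fin PP.
Let Knb : forall P, Ps P -> `|nb P| <= K.
Proof. by move=> P PP; rewrite normrN; exact: Kb. Qed.
Let Kne : forall P, Ps P -> `|ne P| <= K.
Proof. by move=> P PP; rewrite normrN; exact: Ke. Qed.

Let repE c0 c1 c2 c3 F :
  (forall x, F x = c0 + c1 * X x + c2 * Y x + c3 * (X x * Y x)) ->
  sublin_exp Ps F = (Sup Ps a b e c0 c1 c2 c3)%:E := rep Ps0 mX mY fin (F:=F).

Lemma meanX : meanset Ps X = [set x | Am Ps a b e <= x <= Ap Ps a b e].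
Proof.
rewrite /meanset (repE (c0:=0) (c1:=1) (c2:=0) (c3:=0) (F:=X)); last by move=> x; ring.
rewrite (repE (c0:=0) (c1:=-1) (c2:=0) (c3:=0) (F:=fun x => - X x)); last by move=> x; ring.
apply/funext => mu; apply/propext; rewrite /Am /Ap /= !lee_fin.
by split => [[h1 h2]|/andP[]] //; apply/andP.
Qed.

Lemma meanY : meanset Ps Y = [set x | Bm Ps a b e <= x <= Bp Ps a b e].
Proof.
rewrite /meanset (repE (c0:=0) (c1:=0) (c2:=1) (c3:=0) (F:=Y)); last by move=> x; ring.
rewrite (repE (c0:=0) (c1:=0) (c2:=-1) (c3:=0) (F:=fun x => - Y x)); last by move=> x; ring.
apply/funext => mu; apply/propext; rewrite /Bm /Bp /= !lee_fin.
by split => [[h1 h2]|/andP[]] //; apply/andP.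
Qed.

Lemma Am2 : Am Ps a nb ne = Am Ps a b e.
Proof. by rewrite /Am /Sup; congr (- sup _); apply: eq_imagel => P _; rewrite /mom; ring. Qed.
Lemma Ap2 : Ap Ps a nb ne = Ap Ps a b e.
Proof. by rewrite /Ap /Sup; congr (sup _); apply: eq_imagel => P _; rewrite /mom; ring. Qed.
Lemma Bm2 : Bm Ps a nb ne = - Bp Ps a b e.
Proof. by rewrite /Bm /Bp /Sup; congr (- sup _); apply: eq_imagel => P _; rewrite /mom; ring. Qed.
Lemma Bp2 : Bp Ps a nb ne = - Bm Ps a b e.
Proof. by rewrite /Bm /Bp /Sup opprK; congr (sup _); apply: eq_imagel => P _; rewrite /mom; ring. Qed.

Lemma PhiE m1 m2 : sublin_exp Ps (fun x => (X x - m1) * (Y x - m2)) = (Phi Ps a b e m1 m2)%:E.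
Proof. by apply: repE => x; ring. Qed.

Lemma Phi2E m1 m2 : sublin_exp Ps (fun x => - ((X x - m1) * (Y x - m2))) =
  (Phi Ps a nb ne m1 (- m2))%:E.
Proof.
rewrite (repE (c0 := - (m1 * m2)) (c1 := m2) (c2 := m1) (c3 := -1)); last by move=> x; ring.
by congr (_%:E); rewrite /Phi /Sup; congr (sup _); apply: eq_imagel => P _; rewrite /mom; ring.
Qed.

Lemma upper1 : is_maxmin (meanset Ps Y) (meanset Ps X)
  (fun mu2 mu1 => sublin_exp Ps (fun x => (X x - mu1) * (Y x - mu2))) (S Ps a b e)%:E.
Proof.
have [k [Hk [[m2s hm2s ks] kS]]] := C1 Ps0 Ka Kb Ke.
rewrite meanX meanY; exists (fun m2 => (k m2)%:E); split.
- move=> m2 _.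
  rewrite (eq_imagel (f' := fun mu1 => (Phi Ps a b e mu1 m2)%:E)); last by move=> ? _; rewrite PhiE.
  have [[x hx kx] Hx] := Hk m2; apply: is_min_E; first by exists x.
  by move=> y hy; exact: Hx.
- apply: is_max_E; first by exists m2s => //; rewrite ks.
  by move=> m2 hm2; exact: kS.
Qed.


Lemma upper2 : is_maxmin [set: R] [set: R]
  (fun beta alpha => sublin_exp Ps
     (fun x => (((X x + Y x) / 2 - alpha) ^+ 2 - ((X x - Y x) / 2 - beta) ^+ 2)))
  (S Ps a b e)%:E.
Proof.
have [h [Hh [[bs hbs] hS]]] := C2 Ps0 Ka Kb Ke.
exists (fun beta => (h beta)%:E); split.
- move=> beta _.
  rewrite (eq_imagel (f' := fun alpha => (G Ps a b e beta alpha)%:E)); last first.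
    move=> alpha _; rewrite /G -PhiE; congr (sublin_exp Ps _); apply/funext => x.
    by field.
  have [[x kx] Hx] := Hh beta; apply: is_min_E; first by exists x.
  by move=> y _; exact: Hx.
- apply: is_max_E; first by exists bs => //; rewrite hbs.
  by move=> beta _; exact: hS.
Qed.

Lemma lower1 : is_minmax (meanset Ps Y) (meanset Ps X)
  (fun mu2 mu1 => (- sublin_exp Ps (fun x => (- ((X x - mu1) * (Y x - mu2)))%R))%E)
  (- S Ps a nb ne)%:E.
Proof.
have [k [Hk [[m2s hm2s ks] kS]]] := C1 Ps0 Ka Knb Kne.
rewrite Am2 Ap2 Bm2 Bp2 in Hk hm2s kS.
rewrite meanX meanY; exists (fun m2 => (- k (- m2))%:E); split.
- move=> m2 _.
  rewrite (eq_imagel (f' := fun mu1 => (- Phi Ps a nb ne mu1 (- m2))%:E)); last first.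
    by move=> ? _; rewrite Phi2E.
  have [[x hx kx] Hx] := Hk (- m2); apply: is_max_E; first by exists x => //; rewrite kx.
  by move=> y hy; rewrite lerN2; exact: Hx.
- apply: is_min_E; first by exists (- m2s); [move: hm2s => /andP[]; rewrite /=; lra | rewrite opprK ks].
  move=> m2 /andP[h1 h2]; rewrite lerN2; apply: kS; apply/andP; split; lra.
Qed.

Lemma lower2 : is_minmax [set: R] [set: R]
  (fun alpha beta => (- sublin_exp Ps
     (fun x => (- ((X x + Y x) / 2 - alpha) ^+ 2 + ((X x - Y x) / 2 - beta) ^+ 2)%R))%E)
  (- S Ps a nb ne)%:E.
Proof.
have [h [Hh [[bs hbs] hS]]] := C2 Ps0 Ka Knb Kne.
exists (fun alpha => (- h alpha)%:E); split.
- move=> alpha _.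
  rewrite (eq_imagel (f' := fun beta => (- G Ps a nb ne alpha beta)%:E)); last first.
    move=> beta _; rewrite /G.
    rewrite (_ : Phi Ps a nb ne (beta + alpha) (beta - alpha) =
                 Phi Ps a nb ne (alpha + beta) (- (alpha - beta))); last first.
      by congr Phi; ring.
    rewrite EFinN -Phi2E; congr (- sublin_exp Ps _)%E; apply/funext => x.
    by field.
  have [[x kx] Hx] := Hh alpha; apply: is_max_E; first by exists x => //; rewrite kx.
  by move=> y _; rewrite lerN2; exact: Hx.
- apply: is_min_E; first by exists bs => //; rewrite hbs.
  by move=> alpha _; rewrite lerN2; exact: hS.
Qed.

Lemma varU : Y = X ->
  is_min [set sublin_exp Ps (fun x => (X x - mu) ^+ 2) | mu in meanset Ps X] (S Ps a b e)%:E.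
Proof.
move=> YX.
have hab : forall P, Ps P -> b P = a P by move=> P _; rewrite YX.
have [p1 [mu hmu pmu]] := VarU Ps0 Ka Kb Ke hab.
rewrite (eq_imagel (f' := fun mu => (Phi Ps a b e mu mu)%:E)); last first.
  move=> m _; rewrite -PhiE; congr (sublin_exp Ps _); apply/funext => x.
  by rewrite YX expr2.
rewrite meanX; apply: is_min_E; first by exists mu => //; rewrite pmu.
by move=> m _; exact: p1.
Qed.

Lemma varL : Y = X ->
  is_min [set (- sublin_exp Ps (fun x => (- (X x - mu) ^+ 2)%R))%E | mu in meanset Ps X]
    (- S Ps a nb ne)%:E.
Proof.
move=> YX.
have hab : forall P, Ps P -> nb P = - a P by move=> P _; rewrite YX.
have [p1 [mu hmu pmu]] := VarL Ps0 Ka Knb Kne hab.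
rewrite Am2 Ap2 in hmu.
rewrite (eq_imagel (f' := fun mu => (- G Ps a nb ne mu 0)%:E)); last first.
  move=> m _; rewrite /G add0r sub0r EFinN -Phi2E; congr (- sublin_exp Ps _)%E.
  by apply/funext => x; rewrite YX expr2.
rewrite meanX; apply: is_min_E; first by exists mu => //; rewrite pmu.
by move=> m _; rewrite lerN2; exact: p1.
Qed.

End Main.

Unset Implicit Arguments.
Local Open Scope ereal_scope.

Theorem proposition3p12 (d : measure_display) (T : measurableType d)
  (R : realType) (Ps : set (probability T R)) (X Y : T -> R) :
  Ps !=set0 ->
  measurable_fun setT X -> measurable_fun setT Y ->
  sublin_exp Ps (fun x => (X x ^+ 2)%R) + sublin_exp Ps (fun x => (Y x ^+ 2)%R) < +oo ->
  let U := (fun x => (X x + Y x) / 2)%R in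
  let V := (fun x => (X x - Y x) / 2)%R in
  (* upper covariance *)
  (exists c : \bar R,
     is_maxmin (meanset Ps Y) (meanset Ps X)
       (fun mu2 mu1 => sublin_exp Ps (fun x => ((X x - mu1) * (Y x - mu2))%R)) c /\
     is_maxmin [set: R] [set: R]
       (fun beta alpha => sublin_exp Ps
          (fun x => ((U x - alpha) ^+ 2 - (V x - beta) ^+ 2)%R)) c) /\
  (* lower covariance *)
  (exists c : \bar R,
     is_minmax (meanset Ps Y) (meanset Ps X)
       (fun mu2 mu1 => - sublin_exp Ps (fun x => (- ((X x - mu1) * (Y x - mu2)))%R)) c /\
     is_minmax [set: R] [set: R]
       (fun alpha beta => - sublin_exp Ps
          (fun x => (- (U x - alpha) ^+ 2 + (V x - beta) ^+ 2)%R)) c) /\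
  (* C_bar(X,X) = V_bar(X) *)
  (exists c : \bar R,
     is_maxmin (meanset Ps X) (meanset Ps X)
       (fun mu2 mu1 => sublin_exp Ps (fun x => ((X x - mu1) * (X x - mu2))%R)) c /\
     is_min [set sublin_exp Ps (fun x => ((X x - mu) ^+ 2)%R) | mu in meanset Ps X] c) /\
  (* C_under(X,X) = V_under(X) *)
  (exists c : \bar R,
     is_minmax (meanset Ps X) (meanset Ps X)
       (fun mu2 mu1 => - sublin_exp Ps (fun x => (- ((X x - mu1) * (X x - mu2)))%R)) c /\
     is_min [set - sublin_exp Ps (fun x => (- (X x - mu) ^+ 2)%R) | mu in meanset Ps X] c).
Proof.
move=> Ps0 mX mY fin U V.
have finXX : sublin_exp Ps (fun x => (X x ^+ 2)%R) + sublin_exp Ps (fun x => (X x ^+ 2)%R) < +oo.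
  have h := sX_fin Ps0 fin.
  by rewrite -(fineK h) -EFinD ltry.
split; [|split; [|split]].
- exists (S Ps (aP X) (bP Y) (eP X Y))%:E; split.
    exact: (upper1 Ps0 mX mY fin).
  exact: (upper2 Ps0 mX mY fin).
- exists (- S Ps (aP X) (fun P => - bP Y P) (fun P => - eP X Y P))%:E; split.
    exact: (lower1 Ps0 mX mY fin).
  exact: (lower2 Ps0 mX mY fin).
- exists (S Ps (aP X) (bP X) (eP X X))%:E; split.
    exact: (upper1 Ps0 mX mX finXX).
  exact: (varU Ps0 mX mX finXX erefl).
- exists (- S Ps (aP X) (fun P => - bP X P) (fun P => - eP X X P))%:E; split.
    exact: (lower1 Ps0 mX mX finXX).
  exact: (varL Ps0 mX mX finXX erefl).
Qed.
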